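(* Let $m\ge 2$, and let $\omega=\sum_i\omega_i|e_i\rangle\langle e_i|$ and $\omega'=\sum_i\omega'_i|f_i\rangle\langle f_i|$ be $n$-dimensional density matrices, diagonal in (possibly different) orthonormal bases $\{|e_i\rangle\}$ and $\{|f_i\rangle\}$. Suppose $\omega\otimes\frac{1}{m}\mathbb{I}_m\succ\omega'\otimes|0\rangle\langle 0|$. Then there exists a density matrix $\tilde\omega=\sum_i\tilde\omega_i|e_i\rangle\langle e_i|$, diagonal in the basis $\{|e_i\rangle\}$, such that $d(\omega,\omega')\ge d(\omega,\tilde\omega)$ and $\omega\otimes\frac{1}{m}\mathbb{I}_m\succ\tilde\omega\otimes|0\rangle\langle 0|$.
   Context: For density matrices $\rho,\sigma$, $\rho\succ\sigma$ means that the vector of eigenvalues of $\rho$ majorizes that of $\sigma$ (vectors padded with zeros to equal length): the sum of the $k$ largest eigenvalues of $\rho$ is at least that of $\sigma$ for every $k$. $|0\rangle$ is a unit vector in $\mathbb{C}^m$. The trace distance is $d(\omega,\omega')=\frac12\|\omega-\omega'\|_1$. *)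

(* Defs.v *)
(* Scalars: an arbitrary numClosedFieldType C (a model of the complex numbers, e.g. algC). *)
From HB Require Import structures.
From mathcomp Require Import all_boot all_order all_algebra all_field.
Set Implicit Arguments. Unset Strict Implicit. Unset Printing Implicit Defensive.
Import Order.TTheory GRing.Theory Num.Theory.
Local Open Scope ring_scope.

Definition adjmx (C : numClosedFieldType) (p q : nat) (A : 'M[C]_(p, q)) : 'M[C]_(q, p) :=
  (map_mx (@Num.conj C) A)^T.

Definition density (C : numClosedFieldType) (p : nat) (A : 'M[C]_p) : Prop :=
  [/\ adjmx A = A,
      forall v : 'cV[C]_p, 0 <= (adjmx v *m A *m v) ord0 ord0
    & \tr A = 1].

(* a unitary matrix: its columns form an orthonormal basis *)
Definition unitary (C : numClosedFieldType) (p : nat) (U : 'M[C]_p) : Prop := adjmx U *m U = 1%:M.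

(* Kronecker (tensor) product, row-major index convention k = i * q + j *)
Lemma kron_idx1 (p q : nat) (k : 'I_(p * q)) : (k %/ q < p)%N.
Proof.
case: q k => [|q] k; first by case: k => k; rewrite muln0.
by rewrite ltn_divLR // (ltn_ord k).
Qed.
Lemma kron_idx2 (p q : nat) (k : 'I_(p * q)) : (k %% q < q)%N.
Proof.
case: q k => [|q] k; first by case: k => k; rewrite muln0.
by rewrite ltn_pmod.
Qed.
Definition kidx1 p q (k : 'I_(p * q)) : 'I_p := Ordinal (kron_idx1 k).
Definition kidx2 p q (k : 'I_(p * q)) : 'I_q := Ordinal (kron_idx2 k).

Definition kron (C : numClosedFieldType) (p q : nat) (A : 'M[C]_p) (B : 'M[C]_q) : 'M[C]_(p * q) :=
  \matrix_(k, l) (A (kidx1 k) (kidx1 l) * B (kidx2 k) (kidx2 l)).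

(* the eigenvalues (with multiplicity) of a square matrix: a chosen list of
   the roots of its characteristic polynomial *)
Lemma spec_exists (C : numClosedFieldType) (p : nat) (A : 'M[C]_p) :
  exists s : seq C, char_poly A == \prod_(z <- s) ('X - z%:P).
Proof.
have [s Hs] := closed_field_poly_normal (char_poly A).
by exists s; apply/eqP; rewrite {1}Hs (monicP (char_poly_monic A)) scale1r.
Qed.
Definition spec (C : numClosedFieldType) (p : nat) (A : 'M[C]_p) : seq C := xchoose (spec_exists A).

(* sum of the k largest eigenvalues (for Hermitian matrices the eigenvalues
   are real, so the sort is by the usual order); padding with zeros is implicit
   since take k returns the whole list when k exceeds its size *)
Definition topk_sum (C : numClosedFieldType) (p : nat) (A : 'M[C]_p) (k : nat) : C :=
  \sum_(z <- take k (sort (fun x y : C => y <= x) (spec A))) z.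

Definition majorizes (C : numClosedFieldType) (p q : nat) (A : 'M[C]_p) (B : 'M[C]_q) : Prop :=
  forall k : nat, topk_sum B k <= topk_sum A k.

Definition trnorm (C : numClosedFieldType) (p : nat) (A : 'M[C]_p) : C := \sum_(z <- spec A) `|z|.
Definition trdist (C : numClosedFieldType) (p : nat) (A B : 'M[C]_p) : C := trnorm (A - B) / 2%:R.

(* Main.v *)
Require Import Defs.
From HB Require Import structures.
From mathcomp Require Import all_boot all_order all_algebra all_field.
From mathcomp Require mxtens.
Import Order.TTheory GRing.Theory Num.Theory.
Local Open Scope ring_scope.
Set Implicit Arguments. Unset Strict Implicit. Unset Printing Implicit Defensive.


Lemma adjmxE (C : numClosedFieldType) p q (A : 'M[C]_(p,q)) :
  adjmx A = map_mx Num.conj (A ^T).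
Proof. by rewrite /adjmx map_trmx. Qed.

Lemma adjmxM (C : numClosedFieldType) p q r (A : 'M[C]_(p,q)) (B : 'M[C]_(q,r)) :
  adjmx (A *m B) = adjmx B *m adjmx A.
Proof. by rewrite /adjmx map_mxM trmx_mul. Qed.

Lemma adjmxK (C : numClosedFieldType) p q (A : 'M[C]_(p,q)) : adjmx (adjmx A) = A.
Proof.
by apply/matrixP=> i j; rewrite !mxE conjCK.
Qed.

Lemma adjmx_diag (C : numClosedFieldType) p (d : 'rV[C]_p) :
  adjmx (diag_mx d) = diag_mx (map_mx Num.conj d).
Proof. by apply/matrixP=> i j; rewrite !mxE; case: eqVneq => [->|]; rewrite ?mulr1n ?mulr0n ?conjC0. Qed.

Lemma adjmxB (C : numClosedFieldType) p q (A B : 'M[C]_(p,q)) :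
  adjmx (A - B) = adjmx A - adjmx B.
Proof. by apply/matrixP=> i j; rewrite !mxE rmorphB. Qed.

Lemma char_poly_sim (R : comUnitRingType) n (U V D : 'M[R]_n) :
  V *m U = 1%:M -> char_poly (U *m D *m V) = char_poly D.
Proof.
move=> VU; have UV : U *m V = 1%:M by apply: mulmx1C.
rewrite /char_poly /char_poly_mx.
set pc := @polyC R.
have -> : 'X%:M - map_mx pc (U *m D *m V) =
   map_mx pc U *m ('X%:M - map_mx pc D) *m map_mx pc V.
  rewrite mulmxBr mulmxBl !map_mxM; congr (_ - _).
  by rewrite scalar_mxC -mulmxA -map_mxM UV map_mx1 mulmx1.
rewrite !det_mulmx mulrC mulrA -det_mulmx -map_mxM VU map_mx1 det1 mul1r.
by [].
Qed.

Lemma spec_conj (C : numClosedFieldType) n (U : 'M[C]_n) (d : 'rV[C]_n) :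
  adjmx U *m U = 1%:M ->
  perm_eq (spec (U *m diag_mx d *m adjmx U)) [seq d 0 i | i <- enum 'I_n].
Proof.
move=> UU; apply: prod_XsubC_eq.
rewrite /spec; have /eqP <- := xchooseP (spec_exists (U *m diag_mx d *m adjmx U)).
rewrite char_poly_sim // char_poly_trig ?diag_mx_is_trig //.
rewrite big_map big_enum /=; apply: eq_bigr => i _; rewrite mxE eqxx mulr1n.
by [].
Qed.


Lemma kronE (C : numClosedFieldType) p q (A : 'M[C]_p) (B : 'M[C]_q) :
  kron A B = mxtens.tensmx A B.
Proof.
by apply/matrixP => i j; rewrite !mxE; congr (A _ _ * B _ _); apply: val_inj.
Qed.

Lemma adjmx_tens (C : numClosedFieldType) p q (A : 'M[C]_p) (B : 'M[C]_q) :
  adjmx (mxtens.tensmx A B) = mxtens.tensmx (adjmx A) (adjmx B).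
Proof. by apply/matrixP => i j; rewrite !mxE rmorphM. Qed.

Lemma tens_index_eq p q (a b : 'I_p * 'I_q) :
  (mxtens.mxtens_index a == mxtens.mxtens_index b) = (a == b).
Proof. exact: (can_eq (@mxtens.mxtens_indexK p q)). Qed.

Lemma tens_diag (C : numClosedFieldType) p q (d : 'rV[C]_p) (e : 'rV[C]_q) :
  mxtens.tensmx (diag_mx d) (diag_mx e) =
  diag_mx (\row_k (d 0 (mxtens.mxtens_unindex k).1 * e 0 (mxtens.mxtens_unindex k).2)).
Proof.
apply/matrixP => i j.
case: (mxtens.mxtens_indexP i) => i1 i2; case: (mxtens.mxtens_indexP j) => j1 j2.
rewrite !mxE !mxtens.mxtens_indexK /= tens_index_eq xpair_eqE.
case: eqVneq => [->|] /=; case: eqVneq => [->|] //=;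
  by rewrite ?mulr1n ?mulr0n ?mulr0 ?mul0r.
Qed.

Lemma tens_11 (C : numClosedFieldType) p q :
  mxtens.tensmx (1%:M : 'M[C]_p) (1%:M : 'M[C]_q) = 1%:M.
Proof.
apply/matrixP => i j.
case: (mxtens.mxtens_indexP i) => i1 i2; case: (mxtens.mxtens_indexP j) => j1 j2.
rewrite !mxE !mxtens.mxtens_indexK /= tens_index_eq xpair_eqE.
by case: (i1 == j1); case: (i2 == j2); rewrite ?mulr1 ?mulr0.
Qed.

Lemma spec_kron (C : numClosedFieldType) p q (U : 'M[C]_p) (d : 'rV[C]_p)
   (W : 'M[C]_q) (e : 'rV[C]_q) :
  adjmx U *m U = 1%:M -> adjmx W *m W = 1%:M ->
  perm_eq (spec (kron (U *m diag_mx d *m adjmx U) (W *m diag_mx e *m adjmx W)))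
    [seq d 0 (mxtens.mxtens_unindex k).1 * e 0 (mxtens.mxtens_unindex k).2 | k <- enum 'I_(p * q)].
Proof.
move=> UU WW.
set K := mxtens.tensmx U W.
have -> : kron (U *m diag_mx d *m adjmx U) (W *m diag_mx e *m adjmx W) =
  K *m diag_mx (\row_k (d 0 (mxtens.mxtens_unindex k).1 * e 0 (mxtens.mxtens_unindex k).2)) *m adjmx K.
  by rewrite kronE -tens_diag /K adjmx_tens !mxtens.tensmx_mul.
have := @spec_conj C _ K (\row_k (d 0 (mxtens.mxtens_unindex k).1 * e 0 (mxtens.mxtens_unindex k).2)).
rewrite /K adjmx_tens mxtens.tensmx_mul UU WW tens_11 => /(_ erefl).
by under eq_map do rewrite mxE.
Qed.


Lemma herm_decomp (C : numClosedFieldType) p (H : 'M[C]_p) :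
  adjmx H = H -> exists (W : 'M[C]_p) (e : 'rV[C]_p),
   adjmx W *m W = 1%:M /\ H = W *m diag_mx e *m adjmx W.
Proof.
move=> HH.
have Hn : H \is normalmx by apply/normalmxP; rewrite -adjmxE HH.
have := orthomx_spectralP Hn.
have Mu := spectral_unitarymx H.
rewrite invmx_unitary // -adjmxE => ->.
exists (adjmx (spectralmx H)), (spectral_diag H); rewrite adjmxK; split => //.
by move/unitarymxP: Mu; rewrite -adjmxE.
Qed.

Lemma adjmx_unitC (C : numClosedFieldType) p (W : 'M[C]_p) :
  adjmx W *m W = 1%:M -> W *m adjmx W = 1%:M.
Proof. exact: mulmx1C. Qed.

Lemma proj_decomp (C : numClosedFieldType) q (v : 'cV[C]_q) :
  adjmx v *m v = 1%:M -> exists (W : 'M[C]_q) (e : 'rV[C]_q),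
   [/\ adjmx W *m W = 1%:M, v *m adjmx v = W *m diag_mx e *m adjmx W,
       (forall j, e 0 j = 0 \/ e 0 j = 1) & \sum_j e 0 j = 1].
Proof.
move=> vv.
have [W [e [WW HP]]] : exists (W : 'M[C]_q) (e : 'rV[C]_q),
   adjmx W *m W = 1%:M /\ v *m adjmx v = W *m diag_mx e *m adjmx W.
  by apply: herm_decomp; rewrite adjmxM adjmxK.
have WW' := adjmx_unitC WW.
have De : diag_mx e = adjmx W *m (v *m adjmx v) *m W.
  by rewrite HP !mulmxA WW mul1mx -mulmxA WW mulmx1.
have PP : (v *m adjmx v) *m (v *m adjmx v) = v *m adjmx v.
  by rewrite mulmxA -(mulmxA v) vv mulmx1.
exists W, e; split => //.
- move=> j.
  have : diag_mx e *m diag_mx e = diag_mx e.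
    rewrite De !mulmxA -(mulmxA _ W) WW' mulmx1.
    by rewrite -(mulmxA (adjmx W *m v) (adjmx v) v) vv mulmx1.
  move/matrixP => /(_ j j); rewrite mul_diag_mx !mxE eqxx mulr1n => /eqP.
  rewrite -subr_eq0 -{3}(mulr1 (e 0 j)) -mulrBr mulf_eq0 subr_eq0.
  by case/orP => /eqP ->; [left|right].
- have := congr1 mxtrace De; rewrite mxtrace_diag => ->.
  rewrite mxtrace_mulC !mulmxA WW' mul1mx mxtrace_mulC.
  by rewrite vv mxtrace1.
Qed.


Definition pp (R : numFieldType) (x : R) := (x + `|x|) / 2%:R.

Lemma pp_ge (R : numFieldType) (x : R) : x \is Num.real -> x <= pp x.
Proof.
move=> xr; rewrite /pp ler_pdivlMr ?ltr0n // mulr_natr mulr2n lerD2l.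
exact: real_ler_norm.
Qed.

Lemma pp_ge0 (R : numFieldType) (x : R) : x \is Num.real -> 0 <= pp x.
Proof.
move=> xr; rewrite /pp divr_ge0 ?ler0n // addrC -lerBlDr sub0r.
by rewrite -normrN real_ler_norm // rpredN.
Qed.

Lemma pp_id (R : numFieldType) (x : R) : 0 <= x -> pp x = x.
Proof.
move=> x0; rewrite /pp ger0_norm // -mulr2n -[x *+ 2]mulr_natr mulfK //.
by rewrite pnatr_eq0.
Qed.

Lemma pp_0 (R : numFieldType) (x : R) : x \is Num.real -> x <= 0 -> pp x = 0.
Proof. by move=> xr x0; rewrite /pp ler0_norm // subrr mul0r. Qed.

Lemma pp_conv (R : numFieldType) (I : Type) (r : seq I) (c a : I -> R) :
  (forall i, 0 <= c i) ->
  pp (\sum_(i <- r) c i * a i) <= \sum_(i <- r) c i * pp (a i).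
Proof.
move=> c0; rewrite /pp.
have -> : \sum_(i <- r) c i * ((a i + `|a i|) / 2%:R) =
   (\sum_(i <- r) c i * a i + \sum_(i <- r) c i * `|a i|) / 2%:R.
  by rewrite mulrDl !mulr_suml -big_split /=; apply: eq_bigr => i _; rewrite mulrA mulrDr mulrDl.
rewrite ler_wpM2r ?invr_ge0 ?ler0n // lerD2l.
apply: le_trans (ler_norm_sum _ _ _) _.
by apply: ler_sum => i _; rewrite normrM ger0_norm.
Qed.

Definition rge (R : numFieldType) := fun x y : R => y <= x.

Lemma sum_pp_ge0 (R : numFieldType) (l : seq R) t : t \is Num.real ->
  all (fun x => x \is Num.real) l -> 0 <= \sum_(x <- l) pp (x - t).
Proof.
move=> tr /allP lr; rewrite big_seq; apply: sumr_ge0 => x xl.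
by apply: pp_ge0; rewrite rpredB // lr.
Qed.

Lemma take_bound (R : numFieldType) (l : seq R) k t : 0 <= t ->
  all (fun x => x \is Num.real) l ->
  \sum_(x <- take k l) x <= k%:R * t + \sum_(x <- l) pp (x - t).
Proof.
move=> t0; have tr := ger0_real t0.
elim: l k => [|a l IH] k /=.
  by rewrite !big_nil addr0 mulr_ge0 ?ler0n.
move=> all_al; have /andP [ar lr] := all_al; case: k => [|k].
  by rewrite /= big_nil mul0r add0r sum_pp_ge0.
rewrite /= !big_cons.
have h1 : a <= t + pp (a - t).
  by rewrite -lerBlDl pp_ge // rpredB.
have := IH k lr => h2.
rewrite -natr1 mulrDl mul1r [k%:R * t + t]addrC addrACA.
exact: lerD.
Qed.

Lemma take_exact (R : numFieldType) (l : seq R) k t :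
  all (fun x => x \is Num.real) l -> t \is Num.real ->
  (forall x, x \in take k l -> t <= x) ->
  (forall x, x \in drop k l -> x <= t) ->
  ((size l < k)%N -> t = 0) ->
  \sum_(x <- take k l) x = k%:R * t + \sum_(x <- l) pp (x - t).
Proof.
move=> + tr; elim: l k => [|a l IH] k /=.
  move=> _ _ _ h; rewrite !big_nil addr0; case: k h => [|k] h.
    by rewrite mul0r.
  by rewrite h // mulr0.
case/andP => ar lr; case: k => [|k] /= htake hdrop hsize.
  rewrite big_nil mul0r add0r; symmetry; apply: big1_seq => x /andP [_ xl].
  have all_al : all (fun x => x \is Num.real) (a :: l) by rewrite /= ar.
  apply: pp_0; first by rewrite rpredB // (allP all_al).
  by rewrite subr_le0 hdrop.
rewrite !big_cons (IH k lr).
- rewrite -natr1 mulrDl mul1r [k%:R * t + t]addrC addrACA; congr (_ + _).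
  by rewrite pp_id ?subr_ge0 ?htake ?mem_head // addrC subrK.
- by move=> x xl; apply: htake; rewrite inE xl orbT.
- by [].
- by move=> h; apply: hsize.
Qed.

Lemma topk_exact (R : numFieldType) (s : seq R) k : all (fun x => 0 <= x) s ->
  exists2 t, 0 <= t & \sum_(x <- take k (sort (fun x y : R => y <= x) s)) x
     = k%:R * t + \sum_(x <- s) pp (x - t).
Proof.
move=> s0.
set r := (fun x y : R => y <= x).
set l := sort r s.
have pl : perm_eq l s by rewrite perm_sort.
have l0 : all (fun x => 0 <= x) l by rewrite (perm_all _ pl).
have lr : all (fun x => x \is Num.real) l.
  by apply/allP => x /(allP l0); apply: ger0_real.
have rtr : transitive r by move=> y x z hxy hyz; apply: le_trans hyz hxy.
have rrefl : reflexive r by move=> x; apply: lexx.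
have srt : sorted r l.
  apply: (sort_sorted_in (P := fun x => 0 <= x)) => // x y x0 y0.
  by rewrite /r orbC real_leVge ?ger0_real.
pose t := if (k < size l)%N then nth 0 l k else 0.
have t0 : 0 <= t.
  rewrite /t; case: ifP => // kl; exact: (allP l0) _ (mem_nth 0 kl).
exists t => //; rewrite -(perm_big s pl); apply: take_exact => //.
- exact: ger0_real.
- move=> x; rewrite /t; case: ifP => kl; last by move=> /mem_take /(allP l0).
  case/(nthP 0) => i; rewrite size_take kl => ik <-.
  rewrite nth_take //.
  have : r (nth 0 l i) (nth 0 l k).
    apply: (sorted_ltn_nth rtr) => //; rewrite inE //.
    exact: ltn_trans ik kl.
  by [].
- move=> x; rewrite /t; case: ifP => kl; last first.
    by rewrite drop_oversize // leqNgt kl.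
  case/(nthP 0) => i; rewrite size_drop => ik <-.
  rewrite nth_drop.
  have : r (nth 0 l k) (nth 0 l (k + i)).
    apply: (sorted_leq_nth rtr rrefl) => //; rewrite ?inE ?leq_addr //.
    by rewrite -ltn_subRL.
  by [].
- by rewrite /t => h; rewrite ifN // -leqNgt ltnW.
Qed.

Lemma topk_bound (R : numFieldType) (s : seq R) k t : 0 <= t ->
  all (fun x => x \is Num.real) s ->
  \sum_(x <- take k (sort (fun x y : R => y <= x) s)) x <= k%:R * t + \sum_(x <- s) pp (x - t).
Proof.
move=> t0 sr.
have pl : perm_eq (sort (fun x y : R => y <= x) s) s by rewrite perm_sort.
rewrite -(perm_big s pl); apply: take_bound => //.
by rewrite (perm_all _ pl).
Qed.


Lemma sum_tens (R : nmodType) p q (F : 'I_p -> 'I_q -> R) :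
  \sum_(k < p * q) F (mxtens.mxtens_unindex k).1 (mxtens.mxtens_unindex k).2 =
  \sum_(i < p) \sum_(j < q) F i j.
Proof.
rewrite pair_big.
rewrite (reindex (@mxtens.mxtens_index p q)); last first.
  by exists (@mxtens.mxtens_unindex p q) => k _; rewrite ?mxtens.mxtens_indexK ?mxtens.mxtens_unindexK.
by apply: eq_bigr => ij _; rewrite mxtens.mxtens_indexK.
Qed.

Lemma phi_kron (C : numClosedFieldType) p q (U : 'M[C]_p) (d : 'rV[C]_p) (v : 'cV[C]_q) :
  adjmx U *m U = 1%:M -> adjmx v *m v = 1%:M -> (forall i, 0 <= d 0 i) ->
  all (fun x => 0 <= x) (spec (kron (U *m diag_mx d *m adjmx U) (v *m adjmx v))) /\
  forall t, 0 <= t ->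
  \sum_(x <- spec (kron (U *m diag_mx d *m adjmx U) (v *m adjmx v))) pp (x - t)
   = \sum_i pp (d 0 i - t).
Proof.
move=> UU vv d0.
have [W [e [WW -> e01 esum]]] := proj_decomp vv.
have pe := spec_kron d e UU WW.
split.
  rewrite (perm_all _ pe); apply/allP => x /mapP [k _ ->].
  by case: (e01 (mxtens.mxtens_unindex k).2) => ->; rewrite ?mulr0 ?mulr1.
move=> t t0.
rewrite (perm_big _ pe) big_map big_enum /=.
rewrite (sum_tens (fun i j => pp (d 0 i * e 0 j - t))).
apply: eq_bigr => i _.
transitivity (\sum_j e 0 j * pp (d 0 i - t)).
  apply: eq_bigr => j _; case: (e01 j) => ->; rewrite ?mulr0 ?mulr1 ?mul0r ?mul1r //.
  by rewrite sub0r pp_0 // ?rpredN ?ger0_real // oppr_le0.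
by rewrite -mulr_suml esum mul1r.
Qed.


Lemma entry_conj (C : numClosedFieldType) a b (K : 'M[C]_(a, b)) (h : 'rV[C]_b) i :
  (K *m diag_mx h *m adjmx K) i i = \sum_j `|K i j| ^+ 2 * h 0 j.
Proof.
rewrite mul_mx_diag !mxE; apply: eq_bigr => j _.
by rewrite !mxE normCK mulrAC.
Qed.

Lemma row_norm (C : numClosedFieldType) a b (K : 'M[C]_(a, b)) i :
  K *m adjmx K = 1%:M -> \sum_j `|K i j| ^+ 2 = 1.
Proof.
move/matrixP => /(_ i i); rewrite !mxE eqxx mulr1n => <-.
by apply: eq_bigr => j _; rewrite !mxE normCK.
Qed.

Lemma col_norm (C : numClosedFieldType) a b (K : 'M[C]_(a, b)) j :
  adjmx K *m K = 1%:M -> \sum_i `|K i j| ^+ 2 = 1.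
Proof.
move/matrixP => /(_ j j); rewrite !mxE eqxx mulr1n => <-.
by apply: eq_bigr => i _; rewrite !mxE normCK mulrC.
Qed.

Lemma adjmx_conj (C : numClosedFieldType) a (U D : 'M[C]_a) :
  adjmx (U *m D *m adjmx U) = U *m adjmx D *m adjmx U.
Proof. by rewrite !adjmxM adjmxK mulmxA. Qed.

Lemma psd_diag (C : numClosedFieldType) a (U : 'M[C]_a) (h : 'rV[C]_a) j :
  adjmx U *m U = 1%:M ->
  (forall v : 'cV[C]_a, 0 <= (adjmx v *m (U *m diag_mx h *m adjmx U) *m v) ord0 ord0) ->
  0 <= h 0 j.
Proof.
move=> UU; pose e : 'cV[C]_a := delta_mx j 0.
move=> /(_ (U *m e)).
have -> : adjmx (U *m e) *m (U *m diag_mx h *m adjmx U) *m (U *m e)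
   = adjmx e *m diag_mx h *m adjmx (adjmx e).
  rewrite adjmxK adjmxM !mulmxA -(mulmxA _ (adjmx U) U) UU mulmx1.
  by rewrite -(mulmxA _ (adjmx U) U) UU mulmx1.
rewrite entry_conj (bigD1 j) //= big1 ?addr0.
  by rewrite !mxE !eqxx conjC1 normr1 expr1n mul1r.
by move=> i ij; rewrite !mxE (negbTE ij) /= conjC0 normr0 expr0n mul0r.
Qed.

Lemma topk_exact' (C : numClosedFieldType) p (A : 'M[C]_p) k :
  all (fun x => 0 <= x) (spec A) ->
  exists2 t, 0 <= t & topk_sum A k = k%:R * t + \sum_(x <- spec A) pp (x - t).
Proof. exact: topk_exact. Qed.

Lemma topk_bound' (C : numClosedFieldType) p (A : 'M[C]_p) k t : 0 <= t ->
  all (fun x => 0 <= x) (spec A) ->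
  topk_sum A k <= k%:R * t + \sum_(x <- spec A) pp (x - t).
Proof.
move=> t0 A0; apply: topk_bound => //.
by apply/allP => x /(allP A0); apply: ger0_real.
Qed.


Unset Implicit Arguments.

Theorem mainTheorem2 (C : numClosedFieldType) (n m : nat) (hm : (2 <= m)%N)
  (E F : 'M[C]_n) (w w' : 'rV[C]_n) (v0 : 'cV[C]_m) :
  unitary E -> unitary F -> adjmx v0 *m v0 = 1%:M ->
  density (E *m diag_mx w *m adjmx E) ->
  density (F *m diag_mx w' *m adjmx F) ->
  majorizes (kron (E *m diag_mx w *m adjmx E) (m%:R^-1 *: (1%:M : 'M[C]_m)))
            (kron (F *m diag_mx w' *m adjmx F) (v0 *m adjmx v0)) ->
  exists wt : 'rV[C]_n,
    [/\ density (E *m diag_mx wt *m adjmx E),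
        trdist (E *m diag_mx w *m adjmx E) (E *m diag_mx wt *m adjmx E)
          <= trdist (E *m diag_mx w *m adjmx E) (F *m diag_mx w' *m adjmx F)
      & majorizes (kron (E *m diag_mx w *m adjmx E) (m%:R^-1 *: (1%:M : 'M[C]_m)))
                  (kron (E *m diag_mx wt *m adjmx E) (v0 *m adjmx v0))].
Proof.
rewrite /unitary => UE UF vv dE dF maj.
have UE' := mulmx1C UE; have UF' := mulmx1C UF.
set G := adjmx E *m F.
have GG : adjmx G *m G = 1%:M.
  by rewrite /G adjmxM adjmxK mulmxA -(mulmxA _ E) UE' mulmx1.
have GG' := mulmx1C GG.
pose wt : 'rV[C]_n := \row_i \sum_j `|G i j| ^+ 2 * w' 0 j.
have w'0 : forall j, 0 <= w' 0 j.
  move=> j; case: dF => _ psd _; have := @psd_diag _ _ F w' j UF; exact.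
have wt0 : forall i, 0 <= wt 0 i.
  move=> i; rewrite mxE; apply: sumr_ge0 => j _.
  by rewrite mulr_ge0 ?exprn_ge0 ?normr_ge0.
have wtE : forall i, (adjmx E *m (F *m diag_mx w' *m adjmx F) *m E) i i = wt 0 i.
  move=> i; have -> : adjmx E *m (F *m diag_mx w' *m adjmx F) *m E =
     G *m diag_mx w' *m adjmx G by rewrite /G adjmxM adjmxK !mulmxA.
  by rewrite entry_conj mxE.
exists wt; split.
- split.
  + rewrite adjmx_conj adjmx_diag; congr (_ *m _ *m _); congr diag_mx.
    by apply/rowP => i; rewrite mxE geC0_conj.
  + move=> v.
    have -> : adjmx v *m (E *m diag_mx wt *m adjmx E) *m v =
       adjmx (adjmx E *m v) *m diag_mx wt *m adjmx (adjmx (adjmx E *m v)).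
      by rewrite adjmxK adjmxM adjmxK !mulmxA.
    rewrite entry_conj; apply: sumr_ge0 => j _.
    by rewrite mulr_ge0 ?exprn_ge0 ?normr_ge0.
  + rewrite mxtrace_mulC mulmxA UE mul1mx mxtrace_diag.
    case: dF => _ _ <-.
    rewrite mxtrace_mulC mulmxA UF mul1mx mxtrace_diag.
    under eq_bigr do rewrite mxE.
    rewrite exchange_big /=; apply: eq_bigr => j _.
    by rewrite -mulr_suml col_norm // mul1r.
- set H := E *m diag_mx w *m adjmx E - F *m diag_mx w' *m adjmx F.
  have HH : adjmx H = H.
    by rewrite /H adjmxB; case: dE => -> _ _; case: dF => -> _ _.
  have [U [h [UU HU]]] := herm_decomp HH.
  have trH : trnorm H = \sum_j `|h 0 j|.
    rewrite /trnorm HU (perm_big _ (spec_conj h UU)) big_map big_enum.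
    by [].
  rewrite /trdist -/H trH.
  have ->: E *m diag_mx w *m adjmx E - E *m diag_mx wt *m adjmx E =
     E *m diag_mx (w - wt) *m adjmx E.
    by rewrite linearB /= mulmxBr mulmxBl.
  rewrite /trnorm (perm_big _ (spec_conj (w - wt) UE)) big_map big_enum /=.
  rewrite ler_wpM2r ?invr_ge0 ?ler0n //.
  set K := adjmx E *m U.
  have KK : adjmx K *m K = 1%:M.
    by rewrite /K adjmxM adjmxK mulmxA -(mulmxA _ E) UE' mulmx1.
  have KH : adjmx E *m H *m E = K *m diag_mx h *m adjmx K.
    by rewrite HU /K adjmxM adjmxK !mulmxA.
  have wd : forall i, (w - wt) 0 i = \sum_j `|K i j| ^+ 2 * h 0 j.
    move=> i; rewrite -entry_conj -KH /H mulmxBr mulmxBl.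
    have -> : adjmx E *m (E *m diag_mx w *m adjmx E) *m E = diag_mx w.
      by rewrite !mulmxA UE mul1mx -mulmxA UE mulmx1.
    rewrite [RHS]mxE [(- _ : 'M[C]_n) i i]mxE wtE [diag_mx w i i]mxE eqxx mulr1n.
    by rewrite !mxE.
  under eq_bigr do rewrite wd.
  apply: le_trans (_ : \sum_i \sum_j `|K i j| ^+ 2 * `|h 0 j| <= _).
    apply: ler_sum => i _; apply: le_trans (ler_norm_sum _ _ _) _.
    by apply: ler_sum => j _; rewrite normrM normrX normr_id.
  rewrite exchange_big /=; apply: ler_sum => j _.
  by rewrite -mulr_suml col_norm // mul1r.
- move=> k.
  apply: le_trans _ (maj k).
  have [A0 PhiA] := phi_kron UF vv w'0.
  have [B0 PhiB] := phi_kron UE vv wt0.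
  have [t t0 eqA] := topk_exact' k A0.
  rewrite eqA.
  apply: le_trans (topk_bound' k t0 B0) _.
  rewrite lerD2l PhiA // PhiB //.
  apply: le_trans (_ : \sum_i \sum_j `|G i j| ^+ 2 * pp (w' 0 j - t) <= _).
    apply: ler_sum => i _.
    have -> : wt 0 i - t = \sum_j `|G i j| ^+ 2 * (w' 0 j - t).
      rewrite mxE; under [RHS]eq_bigr do rewrite mulrBr.
      by rewrite sumrB -mulr_suml row_norm // mul1r.
    have Gc : forall j, 0 <= (fun j => `|G i j| ^+ 2) j by move=> j; rewrite exprn_ge0 ?normr_ge0.
    exact: (pp_conv _ _ Gc).

  rewrite exchange_big /=; apply: ler_sum => j _.
  by rewrite -mulr_suml col_norm // mul1r.
Qed.
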